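(* Let $\{s_k\}_{k\ge0}$ be a strictly positive sequence and let $(L,\omega,\upsilon)$ be the corresponding Krein--Langer string with coefficients $l_j,\omega_j,\upsilon_j$ ($j\ge0$) given by $l_j = \frac{\Delta_{1,k(j)}^2}{\Delta_{0,k(j)-1}\Delta_{0,k(j)}}$; $\omega_j=\frac{\Delta_{0,k(j)}^2}{\Delta_{1,k(j)}\Delta_{1,k(j)+1}}$, $\upsilon_j=0$ if $k(j+1)-k(j)=1$; $\omega_j=\frac{\Delta_{-1,k(j)}}{\Delta_{1,k(j)}}-\frac{\Delta_{-1,k(j+1)}}{\Delta_{1,k(j+1)}}$, $\upsilon_j=\frac{\Delta_{-1,k(j)+1}^2}{\Delta_{0,k(j)}\Delta_{0,k(j)+1}}$ if $k(j+1)-k(j)=2$. Let $\{P_n\}_{n\ge0}$ and $\{Q_n\}_{n\ge0}$ be the associated polynomials of the first and second kind. Then for all $j\ge0$, $$l_j=|P_{k(j)}(0)|^2,\qquad \omega_j=\frac{Q_{k(j)}(0)}{P_{k(j)}(0)}-\frac{Q_{k(j+1)}(0)}{P_{k(j+1)}(0)},$$ and $$\upsilon_j=\begin{cases}0,& k(j+1)-k(j)=1,\\ |Q_{k(j)+1}(0)|^2,& k(j+1)-k(j)=2.\end{cases}$$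
   Context: A real sequence $\{s_k\}_{k\ge0}$ is strictly positive if $\Delta_{0,n}:=\det(s_{i+j})_{i,j=0}^{n}>0$ for all $n\ge0$; $\Delta_{0,-1}:=1$. $\Delta_{1,0}:=1$, $\Delta_{1,n}:=\det(s_{i+j+1})_{i,j=0}^{n-1}$ ($n\ge1$); $\Delta_{-1,0}:=0$, $\Delta_{-1,n}:=\det(s_{i+j-1})_{i,j=0}^{n}$ with $s_{-1}:=0$ ($n\ge1$). For $j\ge0$, $k(j)$ is the largest integer $k\ge0$ such that exactly $j$ of $\Delta_{1,0},\dots,\Delta_{1,k-1}$ are nonzero. Polynomials of the first kind: $P_0:=1/\sqrt{s_0}$ and, for $n\ge1$, $P_n(z):=\frac{1}{\sqrt{\Delta_{0,n-1}\Delta_{0,n}}}\det M_n(z)$, where $M_n(z)$ is the $(n+1)\times(n+1)$ matrix whose first $n$ rows are $(s_i,s_{i+1},\dots,s_{i+n})$, $i=0,\dots,n-1$, and whose last row is $(1,z,\dots,z^n)$. Polynomials of the second kind: $Q_0:=0$ and $Q_n(z):=\int_{\mathbb R}\frac{P_n(\lambda)-P_n(z)}{\lambda-z}\rho(d\lambda)$ for $n\ge1$, where $\rho$ is any positive Borel measure on $\mathbb R$ with $\int\lambda^k\rho(d\lambda)=s_k$ for all $k$ (this does not depend on the choice of $\rho$). *)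

(* Defs.v *)
(* Real numbers are modelled by an arbitrary real closed field
   R : rcfType (needed for Num.sqrt); this contains the case of the reals. *)
From HB Require Import structures.
From mathcomp Require Import all_boot all_order all_algebra.
Set Implicit Arguments. Unset Strict Implicit. Unset Printing Implicit Defensive.
Import Order.TTheory GRing.Theory Num.Theory.
Local Open Scope ring_scope.

Section KreinLanger.
Variable R : rcfType.
Implicit Types (s t : nat -> R).

Definition hankel t (m : nat) : 'M[R]_m := \matrix_(i < m, j < m) t (i + j)%N.

Definition Delta0 s (n : nat) : R := \det (hankel s n.+1).

(* Delta_{0,k-1}, with the convention Delta_{0,-1} = 1 *)
Definition Delta0pred s (k : nat) : R :=
  if k is k'.+1 then Delta0 s k' else 1.

Definition Delta1 s (n : nat) : R :=
  if n is 0 then 1 else \det (hankel (fun k => s k.+1) n).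

(* s shifted: (s_{k-1})_k with s_{-1} := 0 *)
Definition sminus1 s (k : nat) : R := if k is k'.+1 then s k' else 0.

Definition Deltam1 s (n : nat) : R :=
  if n is 0 then 0 else \det (hankel (sminus1 s) n.+1).

Definition strictly_positive s : Prop := forall n : nat, 0 < Delta0 s n.

Definition count_nz1 s (k : nat) : nat :=
  count (fun i => Delta1 s i != 0) (iota 0 k).

Definition is_kidx s (j k : nat) : Prop :=
  count_nz1 s k = j /\ (forall k' : nat, count_nz1 s k' = j -> (k' <= k)%N).

Definition Mmat s (n : nat) : 'M[{poly R}]_n.+1 :=
  \matrix_(i < n.+1, j < n.+1)
     (if (i < n)%N then (s (i + j)%N)%:P else 'X^j).

Definition Ppoly s (n : nat) : {poly R} :=
  if n is 0 then (Num.sqrt (s 0%N))^-1 %:P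
  else (Num.sqrt (Delta0pred s n * Delta0 s n))^-1 *: \det (Mmat s n).

(* the moment functional: p |-> int p drho = sum_m p_m s_m
   (for any measure rho with moments s_k) *)
Definition moment s (p : {poly R}) : R := \sum_(m < size p) p`_m * s m.

(* polynomials of the second kind:
   Q_n(z) = int (P_n(l) - P_n(z)) / (l - z) rho(dl)  (Q_0 = 0) *)
Definition Qn s (n : nat) (z : R) : R :=
  if n is 0 then 0
  else moment s ((Ppoly s n - ((Ppoly s n).[z])%:P) %/ ('X - z%:P)).

(* Krein--Langer string coefficients, given kj = k(j), kj1 = k(j+1) *)
Definition KL_l s (kj : nat) : R :=
  Delta1 s kj ^+ 2 / (Delta0pred s kj * Delta0 s kj).

Definition KL_omega s (kj kj1 : nat) : R :=
  if (kj1 - kj == 1)%N then Delta0 s kj ^+ 2 / (Delta1 s kj * Delta1 s kj.+1)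
  else
    Deltam1 s kj / Delta1 s kj - Deltam1 s kj1 / Delta1 s kj1.

Definition KL_upsilon s (kj kj1 : nat) : R :=
  if (kj1 - kj == 1)%N then 0
  else
    Deltam1 s kj.+1 ^+ 2 / (Delta0 s kj * Delta0 s kj.+1).

End KreinLanger.

(* Main.v *)
Require Import Defs.
From HB Require Import structures.
From mathcomp Require Import all_boot all_order all_algebra fingroup perm.
From mathcomp Require Import zify ring lra.
Set Implicit Arguments. Unset Strict Implicit. Unset Printing Implicit Defensive.
Import Order.TTheory GRing.Theory Num.Theory.
Local Open Scope ring_scope.
Section Aux.
Variable R : comUnitRingType.

Lemma det_row_reindex n (A : 'M[R]_n) (p : 'S_n) :
  \det (\matrix_(i, j) A (p i) j) = (-1) ^+ p * \det A.
Proof.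
have -> : \matrix_(i, j) A (p i) j = row_perm p A by apply/matrixP=> i j; rewrite !mxE.
by rewrite row_permE det_mulmx det_perm.
Qed.

Lemma det_col_reindex n (A : 'M[R]_n) (p : 'S_n) :
  \det (\matrix_(i, j) A i (p j)) = (-1) ^+ p * \det A.
Proof.
have -> : \matrix_(i, j) A i (p j) = col_perm p A by apply/matrixP=> i j; rewrite !mxE.
by rewrite col_permE det_mulmx det_perm odd_permV mulrC.
Qed.

Lemma det_reindex n (A : 'M[R]_n) (p : 'S_n) :
  \det (\matrix_(i, j) A (p i) (p j)) = \det A.
Proof.
have -> : \matrix_(i, j) A (p i) (p j) = \matrix_(i, j) (\matrix_(i, j) A i (p j)) (p i) j.
  by apply/matrixP=> i j; rewrite !mxE.
by rewrite det_row_reindex det_col_reindex mulrA -expr2 sqrr_sign mul1r.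
Qed.
End Aux.

Section DJ.
Variable F : fieldType.

Lemma det2 (A : 'M[F]_2) : \det A = A 0 0 * A 1 1 - A 0 1 * A 1 0.
Proof.
rewrite (expand_det_row _ ord0) !big_ord_recl big_ord0 addr0 /cofactor.
rewrite !det_mx11 !mxE /=.
have e1 : (lift ord0 (ord0 : 'I_1) : 'I_2) = 1 by apply: val_inj.
have e2 : (lift (lift ord0 (ord0 : 'I_1)) (ord0 : 'I_1) : 'I_2) = 0 by apply: val_inj.
rewrite e2 e1 /= expr0 expr1 mul1r.
have -> : (ord0 : 'I_2) = 0 by apply: val_inj.
ring.
Qed.

Lemma schur n1 n2 (D : 'M[F]_n1) (C : 'M[F]_(n1, n2)) (Bm : 'M[F]_(n2, n1)) (A : 'M[F]_n2) :
  A \in unitmx -> \det (block_mx D C Bm A) = \det (D - C *m invmx A *m Bm) * \det A.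
Proof.
move=> uA.
have -> : block_mx D C Bm A = block_mx 1%:M (C *m invmx A) 0 1%:M *m
    block_mx (D - C *m invmx A *m Bm) 0 Bm A.
  rewrite mulmx_block !mul1mx !mul0mx ?mulmx0 ?addr0 ?add0r mulmxKV //.
  by rewrite subrK.
by rewrite det_mulmx det_ublock det_lblock !det1 !mul1r.
Qed.

Definition bord k (M : 'M[F]_(2 + k)) (i j : 'I_2) : 'M[F]_(1 + k) :=
  block_mx (ulsubmx M i j)%:M (row i (ursubmx M)) (col j (dlsubmx M)) (drsubmx M).

Lemma rowcolE m n p (X : 'M[F]_(m, n)) (Y : 'M[F]_(n, p)) i j :
  (row i X *m col j Y) 0 0 = (X *m Y) i j.
Proof. by rewrite !mxE; apply: eq_bigr => l _; rewrite !mxE. Qed.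

Lemma DJ k (M : 'M[F]_(2 + k)) : \det (drsubmx M) != 0 ->
  \det M * \det (drsubmx M) =
  \det (bord M 0 0) * \det (bord M 1 1) - \det (bord M 0 1) * \det (bord M 1 0).
Proof.
move=> nz.
have uA : drsubmx M \in unitmx by rewrite unitmxE unitfE.
set A := drsubmx M.
set S := ulsubmx M - ursubmx M *m invmx A *m dlsubmx M.
have eM : \det M = \det S * \det A by rewrite -{1}[M]submxK schur.
have eB i j : \det (bord M i j) = S i j * \det A.
  rewrite /bord schur //; congr (_ * _); rewrite det_mx11 -row_mul.
  rewrite /S [LHS]mxE [RHS]mxE [in LHS]mxE [in LHS]mxE eqxx mulr1n.
  congr (_ + _); first by rewrite !mxE.
  by rewrite mxE [RHS]mxE rowcolE.
rewrite eM !eB det2; ring.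
Qed.

Definition hh (i0 a : nat) : nat := if a == 0%N then i0 else a.+1.

Lemma bordE k (f : nat -> nat -> F) (i0 j0 : 'I_2) :
  bord (\matrix_(i < 2 + k, j < 2 + k) f i j) i0 j0 =
  \matrix_(a < 1 + k, b < 1 + k) f (hh i0 a) (hh j0 b).
Proof.
apply/matrixP => a b; rewrite /bord !mxE.
case: (splitP a) => [a1 Ha|a1 Ha]; rewrite !mxE; case: (splitP b) => [b1 Hb|b1 Hb]; rewrite !mxE /=.
all: rewrite /hh Ha Hb ?(ord1 a1) ?(ord1 b1) /= ?mulr1n //.
Qed.
End DJ.
Lemma val_lift_perm n (i0 j0 x : 'I_n.+1) :
  val (lift_perm i0 j0 1 x) = if x == i0 then val j0 else bump j0 (unbump i0 x).
Proof.
case: (unliftP i0 x) => [m ->|->]; last by rewrite lift_perm_id eqxx.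
rewrite lift_perm_lift perm1 eq_sym (negbTE (neq_lift _ _)) /=.
by rewrite bumpK.
Qed.
Lemma val_tau k (x : 'I_k.+1) :
  val (lift_perm ord0 ord_max 1 x) = if val x == 0%N then k else (val x).-1.
Proof.
rewrite val_lift_perm; case: x => [[|m] Hm] //=.
rewrite /bump /unbump /=; lia.
Qed.
Lemma val_rho n (x : 'I_n.+1) :
  val (lift_perm ord_max ord0 1 x) = if val x == n then 0%N else (val x).+1.
Proof.
rewrite val_lift_perm; case: x => m Hm /=.
have -> : ((Ordinal Hm == ord_max) = (m == n)) by [].
case: eqP => // ne; rewrite /bump /unbump /=; lia.
Qed.
Lemma val_sig k (x : 'I_k.+2) :
  val (lift_perm (1 : 'I_k.+2) ord_max 1 x) =
  if val x == 0%N then 0%N else if val x == 1%N then k.+1 else (val x).-1.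
Proof.
rewrite val_lift_perm; case: x => m Hm /=.
have -> : ((Ordinal Hm == (1 : 'I_k.+2)) = (m == 1%N)) by [].
case: m Hm => [|[|m]] Hm //=; rewrite /bump /unbump /=; lia.
Qed.

Section Main.
Variable R : rcfType.
Variable s : nat -> R.

Lemma Delta1E n : Delta1 s n = \det (hankel (fun m => s m.+1) n).
Proof. by case: n => [|n] //=; rewrite det_mx00. Qed.

Lemma Deltam1E n : Deltam1 s n = \det (hankel (sminus1 s) n.+1).
Proof. by case: n => [|n] //=; rewrite det_mx11 !mxE. Qed.

Lemma det_congr n (A B : 'M[R]_n) : (forall i j, A i j = B i j) -> \det A = \det B.
Proof. by move=> h; congr (\det _); apply/matrixP. Qed.

Definition gg k (a : nat) : nat :=
  if a == 0%N then 0%N else if a == 1%N then k.+1 else a.-1.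

Lemma hankel_DJ k : Delta1 s k != 0 ->
  Deltam1 s k.+1 * Delta1 s k = Deltam1 s k * Delta1 s k.+1 - Delta0 s k ^+ 2.
Proof.
move=> nz.
pose f a b := sminus1 s (gg k a + gg k b).
pose M : 'M[R]_(2 + k) := \matrix_(i < 2 + k, j < 2 + k) f i j.
have eA : drsubmx M = hankel (fun m => s m.+1) k.
  by apply/matrixP => i j; rewrite !mxE /f /gg /= addnS.
have eM : \det M = Deltam1 s k.+1.
  rewrite Deltam1E -[RHS](det_reindex _ (lift_perm (1 : 'I_k.+2) ord_max 1)).
  set sg := lift_perm _ _ _.
  have -> : M = \matrix_(i, j) (hankel (sminus1 s) k.+2) (sg i) (sg j).
    apply/matrixP => i j; rewrite !mxE !val_sig /f /gg.
    by [].
  by [].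
have := @DJ _ _ M; rewrite eA -Delta1E => /(_ nz); rewrite eM => ->.
rewrite !bordE.
have g0 (a : nat) : gg k (hh (0%R : 'I_2) a) = a by case: a.
have g1 (a : nat) : gg k (hh (1%R : 'I_2) a) = if a == 0%N then k.+1 else a by case: a.
set tau := lift_perm (@ord0 k) ord_max 1.
have e00 : \det (\matrix_(a < 1 + k, b < 1 + k) f (hh 0 a) (hh 0 b)) = Deltam1 s k.
  rewrite Deltam1E; apply: det_congr => a b; rewrite !mxE /f !g0.
  by [].
have e11 : \det (\matrix_(a < 1 + k, b < 1 + k) f (hh 1 a) (hh 1 b)) = Delta1 s k.+1.
  rewrite Delta1E -[RHS](det_reindex _ tau); apply: det_congr => a b; rewrite !mxE /f !g1 !val_tau.
  by case: a b => [[|a'] Ha] [[|b'] Hb]; rewrite /= ?addSn /= ?addnS.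
have e01 : \det (\matrix_(a < 1 + k, b < 1 + k) f (hh 0 a) (hh 1 b)) = (-1) ^+ tau * Delta0 s k.
  rewrite /Delta0 -det_col_reindex; apply: det_congr => a b; rewrite !mxE /f g0 g1 !val_tau.
  by case: b => [[|b'] Hb]; rewrite /= ?addnS /= ?addSn.
have e10 : \det (\matrix_(a < 1 + k, b < 1 + k) f (hh 1 a) (hh 0 b)) = (-1) ^+ tau * Delta0 s k.
  rewrite /Delta0 -det_row_reindex; apply: det_congr => a b; rewrite !mxE /f g0 g1 !val_tau.
  by case: a => [[|a'] Ha]; rewrite /= ?addSn /=.
rewrite e00 e11 e01 e10 mulrACA -expr2 sqrr_sign mul1r.
by [].
Qed.
End Main.

Section Poly.
Variable R : rcfType.
Variable s : nat -> R.

Definition Nmat n (u : nat -> R) : 'M[R]_n.+1 :=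
  \matrix_(i < n.+1, j < n.+1) (if (i < n)%N then s (i + j)%N else u j).

Definition Cf n (j : nat) : R := cofactor (Nmat n (fun _ => 0)) ord_max (inord j).

Lemma cofN n u j : cofactor (Nmat n u) ord_max j = Cf n j.
Proof.
rewrite /Cf inord_val /cofactor; congr (_ * _); apply: det_congr => a b.
by rewrite !mxE lift_max ltn_ord.
Qed.

Lemma detN n u : \det (Nmat n u) = \sum_(j < n.+1) u j * Cf n j.
Proof.
rewrite (expand_det_row _ ord_max); apply: eq_bigr => j _.
by rewrite cofN !mxE ltnn.
Qed.

Lemma detMmat n : \det (Mmat s n) = \poly_(j < n.+1) Cf n j.
Proof.
rewrite (expand_det_row _ ord_max) poly_def; apply: eq_bigr => j _.
rewrite mxE ltnn -mul_polyC mulrC; congr (_ * _).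
rewrite /Cf inord_val /cofactor rmorphM rmorph_sign; congr (_ * _).
rewrite -det_map_mx; congr (\det _); apply/matrixP => a b.
by rewrite !mxE lift_max ltn_ord.
Qed.

Lemma Cf0 n : Cf n 0 = (-1) ^+ n * Delta1 s n.
Proof.
rewrite /Cf (_ : inord 0 = ord0); last by apply: val_inj; rewrite /= inordK.
rewrite /cofactor addn0 Delta1E; congr (_ * _); apply: det_congr => a b.
by rewrite !mxE lift_max ltn_ord /= addnS.
Qed.

Lemma detN_sm n : \det (Nmat n (sminus1 s)) = (-1) ^+ n * Deltam1 s n.
Proof.
rewrite Deltam1E.
have -> : (-1) ^+ n = (-1) ^+ (lift_perm (@ord_max n) ord0 1) :> R.
  by rewrite odd_lift_perm odd_perm1 /= !addbF signr_odd.
rewrite -det_row_reindex; apply: det_congr => a b.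
rewrite !mxE val_rho.
case: a => a Ha /=; case: ifP => [lt|]; first by rewrite (ltn_eqF lt).
move=> nlt; have -> : a == n by rewrite eqn_leq -ltnS Ha leqNgt nlt.
by [].
Qed.
End Poly.

Section PQ.
Variable R : rcfType.
Variable s : nat -> R.

Definition rr n : R := Num.sqrt (Delta0pred s n * Delta0 s n).

Lemma moment_le (p : {poly R}) N : (size p <= N)%N ->
  moment s p = \sum_(m < N) p`_m * s m.
Proof.
move=> h; rewrite /moment (big_ord_widen N (fun m => p`_m * s m) h) big_mkcond.
apply: eq_bigr => i _; case: ifP => // /negbT; rewrite -leqNgt => h'.
by rewrite nth_default // mul0r.
Qed.

Lemma Ppoly_eq n : Ppoly s n = (rr n)^-1 *: \det (Mmat s n).
Proof.
case: n => [|n] //; rewrite /rr /= /Delta0 !det_mx11 !mxE /= mul1r.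
by rewrite -alg_polyC.
Qed.

Lemma P0 n : (Ppoly s n).[0] = (rr n)^-1 * ((-1) ^+ n * Delta1 s n).
Proof.
by rewrite Ppoly_eq hornerZ detMmat horner_coef0 coef_poly /= Cf0.
Qed.

Lemma Q0 n : Qn s n 0 = (rr n)^-1 * ((-1) ^+ n * Deltam1 s n).
Proof.
case: n => [|n]; first by rewrite /= mulr0 mulr0.
rewrite /Qn Ppoly_eq.
set c := (rr n.+1)^-1.
pose q := \poly_(m < n.+1) (c * Cf s n.+1 m.+1).
have eq1 : c *: \det (Mmat s n.+1) - ((c *: \det (Mmat s n.+1)).[0])%:P = q * 'X.
  apply/polyP => i; rewrite coefB coefC coefMX horner_coef0 coefZ detMmat !coef_poly.
  case: i => [|i] /=; last by rewrite subr0 ltnS; case: ifP; rewrite ?mulr0.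
  by rewrite coefZ coef_poly /= subrr.
rewrite eq1 polyC0 subr0 mulpK ?polyX_eq0 // (moment_le (size_poly _ _)).
rewrite -detN_sm detN [in RHS]big_ord_recl /= mul0r add0r mulr_sumr.
apply: eq_bigr => i _; rewrite coef_poly ltn_ord /=.
have -> : bump 0 i = i.+1 by rewrite /bump leq0n.
by rewrite add0n; ring.
Qed.
End PQ.

Lemma ratio (F : fieldType) (r e a b : F) : r != 0 -> e != 0 ->
  (r^-1 * (e * a)) / (r^-1 * (e * b)) = a / b.
Proof.
move=> hr he; have [->|hb] := eqVneq b 0; first by rewrite !mulr0 !invr0 !mulr0.
by field; rewrite hr he hb.
Qed.

Lemma kidx_nz (R : rcfType) (s : nat -> R) j k : is_kidx s j k -> Delta1 s k != 0.
Proof.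
case=> hc hmax; apply/negP => /eqP h0.
have : count_nz1 s k.+1 = j.
  by rewrite /count_nz1 -addn1 iotaD count_cat /= add0n h0 eqxx /= !addn0; exact: hc.
by move/hmax; rewrite ltnn.
Qed.

Theorem corollary5p4 (R : rcfType) (s : nat -> R)
  (Hs : strictly_positive s) (j kj kj1 : nat)
  (Hkj : is_kidx s j kj) (Hkj1 : is_kidx s j.+1 kj1) :
  KL_l s kj = `|(Ppoly s kj).[0]| ^+ 2 /\
  KL_omega s kj kj1 = Qn s kj 0 / (Ppoly s kj).[0] - Qn s kj1 0 / (Ppoly s kj1).[0] /\
  ((kj1 - kj)%N = 1%N -> KL_upsilon s kj kj1 = 0) /\
  ((kj1 - kj)%N = 2%N -> KL_upsilon s kj kj1 = `|Qn s kj.+1 0| ^+ 2).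
Proof.
have Dpos n : 0 < Delta0pred s n * Delta0 s n.
  by apply: mulr_gt0 => //; case: n => [|n] //=; rewrite ltr01.
have rsq n : rr s n ^+ 2 = Delta0pred s n * Delta0 s n.
  by rewrite /rr sqr_sqrtr // ltW.
have rnz n : rr s n != 0 by rewrite /rr gt_eqF // sqrtr_gt0.
have snz n : (-1) ^+ n != 0 :> R by rewrite signr_eq0.
have nz0 := kidx_nz Hkj; have nz1 := kidx_nz Hkj1.
split.
  rewrite P0 real_normK ?num_real // !exprMn sqrr_sign mul1r exprVn rsq /KL_l.
  by rewrite mulrC.
split.
  rewrite !P0 !Q0 !ratio // /KL_omega.
  case: eqP => [h1|//].
  have ek : kj1 = kj.+1 by lia.
  subst kj1.
  have := hankel_DJ nz0 => h.
  have -> : Delta0 s kj ^+ 2 = Deltam1 s kj * Delta1 s kj.+1 - Deltam1 s kj.+1 * Delta1 s kj.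
    by rewrite h; ring.
  by field; rewrite nz0 nz1.
split; first by move=> h; rewrite /KL_upsilon h eqxx.
move=> h; rewrite Q0 /KL_upsilon h /= real_normK ?num_real // !exprMn sqrr_sign mul1r exprVn rsq.
by rewrite mulrC.
Qed.
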